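(* Let $\sigma$ be a completely erasing $k$-block substitution that satisfies the optimality condition. Let $w\in\{0,1\}^*$, $h\in\mathbb N$ and $p=\sigma^h(w)\in\{0,1\}^*$. Then for every $u\in\{0,1\}^\omega$ there is $v\in\{0,1\}^\omega$ such that $\sigma^h(wv)=pu$.
   Context: Binary words: $\{0,1\}^*$ and $\{0,1\}^\omega$ denote finite and infinite binary words, and $\epsilon$ is the empty word. Fix $k\ge2$. An erasing $k$-block substitution is a map $\sigma:\{0,1\}^k\to\{0,1\}^*$ with exactly one block $w_\epsilon$ such that $\sigma(w_\epsilon)=\epsilon$. $\sigma$ is alternating if there are $\sigma_1,\dots,\sigma_k:\{0,1\}\to\{0,1\}^*$ with $\sigma(b_1\cdots b_k)=\sigma_1(b_1)\cdots\sigma_k(b_k)$. It is then extended to all finite or infinite words by $\sigma(u)=\prod_j\sigma_{((j-1)\bmod k)+1}(u_j)$, and iterates $\sigma^h$ are computed with this extension. $\sigma$ is completely erasing if it is erasing and alternating, and every $w\in\{0,1\}^*$ satisfies $\sigma^n(w)=\epsilon$ for some $n\in\mathbb N$. Optimality condition: every $w\in\{0,1\}^\omega$ can be written as $w=\prod_{i\ge1}\sigma(b_i)$ with blocks $b_i\in\{0,1\}^k$ satisfying $\sigma(b_i)\ne\epsilon$. *)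

(* Defs.v *)
(* Binary words: finite = seq bool, infinite = nat -> bool. *)
From mathcomp Require Import all_boot.
Set Implicit Arguments. Unset Strict Implicit. Unset Printing Implicit Defensive.

(* An alternating k-block substitution is given by sig : nat -> bool -> seq bool,
   where sig i (0-indexed, i < k) plays the role of sigma_{i+1}.
   Only the values sig 0, ..., sig (k-1) are ever used. *)

Definition block_img (k : nat) (sig : nat -> bool -> seq bool) (b : seq bool) : seq bool :=
  flatten [seq sig i (nth false b i) | i <- iota 0 k].

Definition sig_fin (k : nat) (sig : nat -> bool -> seq bool) (u : seq bool) : seq bool :=
  flatten [seq sig (j %% k) (nth false u j) | j <- iota 0 (size u)].

Inductive word : Type :=
  | Fin of seq bool
  | Inf of (nat -> bool).

Definition prefix_inf (s : seq bool) (y : nat -> bool) : Prop :=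
  forall i, i < size s -> nth false s i = y i.

Definition cat_inf (p : seq bool) (u : nat -> bool) : nat -> bool :=
  fun n => if n < size p then nth false p n else u (n - size p).

Definition sig_pref (k : nat) (sig : nat -> bool -> seq bool) (x : nat -> bool) (n : nat)
  : seq bool :=
  flatten [seq sig (j %% k) (x j) | j <- iota 0 n].

(* For infinite x
   the infinite product of the images of its letters is the infinite word whose
   prefixes are all the partial products when these are unbounded in length,
   and the (eventually constant) finite partial product otherwise. *)
Definition sig_img (k : nat) (sig : nat -> bool -> seq bool) (x y : word) : Prop :=
  match x, y with
  | Fin s, Fin t => t = sig_fin k sig s
  | Fin _, Inf _ => False
  | Inf x, Inf y => (forall n, prefix_inf (sig_pref k sig x n) y) /\
                    (forall m, exists n, m <= size (sig_pref k sig x n))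
  | Inf x, Fin t => exists N, forall n, N <= n -> sig_pref k sig x n = t
  end.

Fixpoint sig_iter (k : nat) (sig : nat -> bool -> seq bool) (h : nat) (x y : word) : Prop :=
  match h with
  | 0 => x = y
  | h'.+1 => exists z, sig_img k sig x z /\ sig_iter k sig h' z y
  end.

Definition erasing (k : nat) (sig : nat -> bool -> seq bool) : Prop :=
  exists we : seq bool,
    (size we = k /\ block_img k sig we = [::]) /\
    (forall b, size b = k -> block_img k sig b = [::] -> b = we).

(* Completely erasing (alternating is built into the representation). *)
Definition completely_erasing (k : nat) (sig : nat -> bool -> seq bool) : Prop :=
  erasing k sig /\ forall w : seq bool, exists n, iter n (sig_fin k sig) w = [::].

Definition optimal (k : nat) (sig : nat -> bool -> seq bool) : Prop :=
  forall w : nat -> bool, exists b : nat -> seq bool,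
    (forall i, size (b i) = k /\ block_img k sig (b i) <> [::]) /\
    (forall n, prefix_inf (flatten [seq block_img k sig (b i) | i <- iota 0 n]) w).

(* Main.v *)
Require Import Defs.
From mathcomp Require Import all_boot.
From mathcomp Require Import zify.

Lemma sig_pref_add k sig x n m : sig_pref k sig x (n + m) =
  sig_pref k sig x n ++ flatten [seq sig (j %% k) (x j) | j <- iota n m].
Proof. by rewrite /sig_pref iotaD map_cat flatten_cat. Qed.

Lemma flatten_nil_all (s : seq (seq bool)) : flatten s = [::] -> all (fun y => y == [::]) s.
Proof. elim: s => //= a s IH; case: a => //= /IH ->. Qed.

Lemma flatten_map_nil (T : eqType) (f : T -> seq bool) (s : seq T) :
  (forall j, j \in s -> f j = [::]) -> flatten (map f s) = [::].
Proof.
elim: s => //= a s IH H; rewrite H ?mem_head //= IH // => j hj.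
by apply: H; rewrite inE hj orbT.
Qed.

Lemma prefix_inf_cat s t y : prefix_inf (s ++ t) y -> prefix_inf s y.
Proof.
move=> H i hi; rewrite -H ?size_cat; last by lia.
by rewrite nth_cat hi.
Qed.

Lemma cat_prefix P F u : prefix_inf F u -> prefix_inf (P ++ F) (cat_inf P u).
Proof.
move=> H i hi; rewrite /cat_inf nth_cat; case: ifP => // hP.
rewrite H //; rewrite size_cat in hi; move/negbT: hP; lia.
Qed.

Lemma one_step k sig (we : seq bool) : 0 < k -> size we = k ->
  block_img k sig we = [::] -> optimal k sig -> forall w u, exists v,
  sig_img k sig (Inf (cat_inf w v)) (Inf (cat_inf (sig_fin k sig w) u)).
Proof.
move=> k0 swe bwe opt w u.
have [B [HB1 HB2]] := opt u.
have Hwe : forall i, i < k -> sig i (nth false we i) = [::].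
  move=> i ik; move/flatten_nil_all: bwe; rewrite all_map => /allP /(_ i).
  by rewrite mem_iota /= => /(_ ik) /eqP.
set r := size w %% k. set c := drop r we.
pose v := fun n => if n < size c then nth false c n
   else nth false (B ((n - size c) %/ k)) ((n - size c) %% k).
exists v. set x := cat_inf w v.
set L := size w + size c.
have sc : size c = k - r by rewrite size_drop swe.
have rk : r < k by rewrite ltn_mod.
have Lmod : L %% k = 0.
  have -> : L = (size w %/ k).+1 * k.
    rewrite /L sc {1}(divn_eq (size w) k) -/r mulSn; lia.
  by rewrite modnMl.
have claim : forall m, sig_pref k sig x (L + m * k) =
   sig_fin k sig w ++ flatten [seq block_img k sig (B i) | i <- iota 0 m].
  elim=> [|m IH].
    rewrite mul0n addn0 /= cats0 /L sig_pref_add.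
    have -> : sig_pref k sig x (size w) = sig_fin k sig w.
      rewrite /sig_pref /sig_fin; congr flatten; apply/eq_in_map => j.
      by rewrite mem_iota add0n => /andP[_ hj]; rewrite /x /cat_inf hj.
    rewrite flatten_map_nil ?cats0 // => j; rewrite mem_iota => /andP[h1 h2].
    have hj : ~~ (j < size w) by rewrite -leqNgt.
    rewrite /x /cat_inf (negbTE hj) /v.
    have hc : j - size w < size c by lia.
    rewrite hc nth_drop.
    have -> : j %% k = r + (j - size w).
      rewrite -{1}(subnKC h1) -modnDml -/r modn_small //; lia.
    apply: Hwe; lia.
  rewrite mulSn (addnC k) addnA sig_pref_add IH -addn1 iotaD map_cat flatten_cat /=.
  rewrite cats0 -catA; congr (_ ++ (_ ++ _)).
  rewrite /block_img -(addn0 (L + m * k)) iotaDl -map_comp; congr flatten.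
  apply/eq_in_map => j; rewrite mem_iota add0n => /andP[_ hj] /=.
  idtac.
  have -> : (L + m * k + j) %% k = j.
    by rewrite -addnA -modnDml Lmod add0n modnMDl modn_small.
  have hnw : ~~ (L + m * k + j < size w) by rewrite -leqNgt /L; lia.
  rewrite /x /cat_inf (negbTE hnw) /v.
  have hnc : ~~ (L + m * k + j - size w < size c) by rewrite -leqNgt /L; lia.
  rewrite (negbTE hnc).
  have -> : L + m * k + j - size w - size c = m * k + j by rewrite /L; lia.
  by rewrite divnMDl // divn_small // addn0 modnMDl modn_small.
split.
- move=> n.
  have hn : n <= L + n * k by rewrite (leq_trans (leq_pmulr n k0)) // leq_addl.
  have := @cat_prefix (sig_fin k sig w) _ _ (HB2 n); rewrite -claim.
  by rewrite -(subnKC hn) sig_pref_add => /prefix_inf_cat.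
- move=> m; exists (L + m * k); rewrite claim size_cat.
  suff : m <= size (flatten [seq block_img k sig (B i) | i <- iota 0 m]) by lia.
  elim: m => [|m IH] //.
  rewrite -addn1 iotaD map_cat flatten_cat size_cat /= cats0 add0n.
  have : size (block_img k sig (B m)) != 0.
    by rewrite size_eq0; apply/eqP; case: (HB1 m).
  lia.
Qed.

Theorem lemma4p5 (k : nat) (sig : nat -> bool -> seq bool) :
  2 <= k ->
  completely_erasing k sig ->
  optimal k sig ->
  forall (w : seq bool) (h : nat) (p : seq bool),
    p = iter h (sig_fin k sig) w ->
    forall u : nat -> bool, exists v : nat -> bool,
      sig_iter k sig h (Inf (cat_inf w v)) (Inf (cat_inf p u)).
Proof.
move=> k2 [[we [[swe bwe] _]] _] opt w h p ->.
have k0 : 0 < k by lia.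
elim: h w => [|h IH] w u.
  by exists u.
have [v' Hv'] := IH (sig_fin k sig w) u.
have [v Hv] := @one_step k sig we k0 swe bwe opt w v'.
exists v; rewrite iterSr /=.
by exists (Inf (cat_inf (sig_fin k sig w) v')).
Qed.
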